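(* Realize $\mathrm{SO}(3)\times\mathbb{R}$ as the group of $4\times4$ matrices $(C,v)=\begin{pmatrix}C&0\\0&e^v\end{pmatrix}$, $C\in\mathrm{SO}(3)$, $v\in\mathbb{R}$, and let $E_1=e_{32}-e_{23}$, $E_2=e_{13}-e_{31}$, $E_3=e_{21}-e_{12}$, $E_4=e_{44}$ ($e_{jk}$ the $4\times4$ matrix units), $e_1=E_1$, $e_2=E_4$, $e_3=E_2$, $e_4=E_3$. For $\alpha_1^2+\alpha_2^2+\alpha_3^2=1$, $\beta\in\mathbb{R}$ let $$\gamma_2(t)=\gamma_2(\alpha_1,\alpha_2,\alpha_3,\beta;t)=\exp\bigl(t(\alpha_1e_1+\alpha_2e_2+\alpha_3e_3+\beta e_4)\bigr)\exp(-t\beta e_4)$$ (the arclength geodesics through $\mathrm{Id}$ of the left-invariant sub-Riemannian metric $\rho_2$ defined by $\mathrm{span}(e_1,e_2,e_3)$ with orthonormal basis $e_1,e_2,e_3$). Put $w_2=\sqrt{1-\alpha_2^2+\beta^2}$, $\mu_2=\frac{\sin w_2t}{w_2}$, $\nu_2=\frac{1-\cos w_2t}{w_2^2}$. If $\alpha_2\neq\pm1$, then $\gamma_2(t)=(C,v)(t)$ with $v(t)=\alpha_2t$ and the columns $C_1,C_2,C_3$ of $C(t)\in\mathrm{SO}(3)$ given by $$C_1=\begin{pmatrix}(1-\nu_2(\alpha_3^2+\beta^2))\cos\beta t-(\alpha_1\alpha_3\nu_2-\beta\mu_2)\sin\beta t\\ (\alpha_1\alpha_3\nu_2+\beta\mu_2)\cos\beta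 t-(1-\nu_2(\alpha_1^2+\beta^2))\sin\beta t\\ (\alpha_1\beta\nu_2-\alpha_3\mu_2)\cos\beta t-(\alpha_3\beta\nu_2+\alpha_1\mu_2)\sin\beta t\end{pmatrix},$$ $$C_2=\begin{pmatrix}(1-\nu_2(\alpha_3^2+\beta^2))\sin\beta t+(\alpha_1\alpha_3\nu_2-\beta\mu_2)\cos\beta t\\ (\alpha_1\alpha_3\nu_2+\beta\mu_2)\sin\beta t+(1-\nu_2(\alpha_1^2+\beta^2))\cos\beta t\\ (\alpha_1\beta\nu_2-\alpha_3\mu_2)\sin\beta t+(\alpha_3\beta\nu_2+\alpha_1\mu_2)\cos\beta t\end{pmatrix},\quad C_3=\begin{pmatrix}\alpha_1\beta\nu_2+\alpha_3\mu_2\\ \alpha_3\beta\nu_2-\alpha_1\mu_2\\ 1-\nu_2(\alpha_1^2+\alpha_3^2)\end{pmatrix}.$$ If $\alpha_2=\pm1$, then $\gamma_2(t)=(E,\alpha_2t)$, $t\in\mathbb{R}$, where $E$ is the $3\times3$ identity matrix.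
   Context: The matrices $E_1,\dots,E_4$ satisfy $[E_1,E_2]=E_3$, $[E_2,E_3]=E_1$, $[E_3,E_1]=E_2$, $[E_i,E_4]=0$. *)

(* Defs.v *)
From HB Require Import structures.
From mathcomp Require Import all_boot all_order all_algebra.
From mathcomp Require Import all_classical all_reals all_analysis.
Set Implicit Arguments. Unset Strict Implicit. Unset Printing Implicit Defensive.
Import Order.TTheory GRing.Theory Num.Theory.
Import numFieldNormedType.Exports.
Local Open Scope ring_scope.

Definition mexp (R : realType) (A : 'M[R]_4) : 'M[R]_4 :=
  limn (series (fun k : nat => (k`!%:R)^-1 *: A ^+ k)).

(* Matrix units e_{jk} (1-based in the paper, 0-based here). *)
Definition eu (R : realType) (j k : 'I_4) : 'M[R]_4 := delta_mx j k.

Definition i0 : 'I_4 := inord 0.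
Definition i1 : 'I_4 := inord 1.
Definition i2 : 'I_4 := inord 2.
Definition i3 : 'I_4 := inord 3.

Definition E1 (R : realType) : 'M[R]_4 := eu R i2 i1 - eu R i1 i2.
Definition E2 (R : realType) : 'M[R]_4 := eu R i0 i2 - eu R i2 i0.
Definition E3 (R : realType) : 'M[R]_4 := eu R i1 i0 - eu R i0 i1.
Definition E4 (R : realType) : 'M[R]_4 := eu R i3 i3.

Definition e1 (R : realType) := E1 R.
Definition e2 (R : realType) := E4 R.
Definition e3 (R : realType) := E2 R.
Definition e4 (R : realType) := E3 R.

Definition gamma2 (R : realType) (a1 a2 a3 b t : R) : 'M[R]_4 :=
  mexp (t *: (a1 *: e1 R + a2 *: e2 R + a3 *: e3 R + b *: e4 R))
  *m mexp ((- (t * b)) *: e4 R).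

Definition pairCv (R : realType) (C : 'M[R]_3) (v : R) : 'M[R]_4 :=
  block_mx C 0 0 (expR v)%:M.

Definition w2 (R : realType) (a2 b : R) : R := Num.sqrt (1 - a2 ^+ 2 + b ^+ 2).
Definition mu2 (R : realType) (a2 b t : R) : R :=
  sin (w2 a2 b * t) / w2 a2 b.
Definition nu2 (R : realType) (a2 b t : R) : R :=
  (1 - cos (w2 a2 b * t)) / (w2 a2 b) ^+ 2.

Definition Cmat (R : realType) (a1 a2 a3 b t : R) : 'M[R]_3 :=
  let mu := mu2 a2 b t in
  let nu := nu2 a2 b t in
  let c := cos (b * t) in
  let s := sin (b * t) in
  let C1 : seq R := [:: (1 - nu * (a3 ^+ 2 + b ^+ 2)) * c - (a1 * a3 * nu - b * mu) * s;
                (a1 * a3 * nu + b * mu) * c - (1 - nu * (a1 ^+ 2 + b ^+ 2)) * s;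
                (a1 * b * nu - a3 * mu) * c - (a3 * b * nu + a1 * mu) * s] in
  let C2 : seq R := [:: (1 - nu * (a3 ^+ 2 + b ^+ 2)) * s + (a1 * a3 * nu - b * mu) * c;
                (a1 * a3 * nu + b * mu) * s + (1 - nu * (a1 ^+ 2 + b ^+ 2)) * c;
                (a1 * b * nu - a3 * mu) * s + (a3 * b * nu + a1 * mu) * c] in
  let C3 : seq R := [:: a1 * b * nu + a3 * mu;
                a3 * b * nu - a1 * mu;
                1 - nu * (a1 ^+ 2 + a3 ^+ 2)] in
  \matrix_(i < 3, j < 3) nth (0 : R) (nth [::] [:: C1; C2; C3] j) i.

(* Main.v *)
Require Import Defs.
From HB Require Import structures.
From mathcomp Require Import all_boot all_order all_algebra.
From mathcomp Require Import all_classical all_reals all_analysis.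
From mathcomp Require Import ring lra.
Import Order.TTheory GRing.Theory Num.Theory.
Import numFieldNormedType.Exports.
Local Open Scope ring_scope.

Section S.
Variable R : realType.
Definition mk4 (f : nat -> nat -> R) : 'M[R]_4 := \matrix_(i < 4, j < 4) f i j.

Lemma mk4M f g : mk4 f * mk4 g =
  mk4 (fun i j => f i 0%N * g 0%N j + f i 1%N * g 1%N j + f i 2%N * g 2%N j + f i 3%N * g 3%N j).
Proof.
apply/matrixP => i j; rewrite -mulmxE !mxE !big_ord_recl big_ord0 !mxE /=.
by rewrite addr0 !addrA.
Qed.
Lemma mk4D f g : mk4 f + mk4 g = mk4 (fun i j => f i j + g i j).
Proof. by apply/matrixP => i j; rewrite !mxE. Qed.
Lemma mk4N f : - mk4 f = mk4 (fun i j => - f i j).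
Proof. by apply/matrixP => i j; rewrite !mxE. Qed.
Lemma mk4Z a f : a *: mk4 f = mk4 (fun i j => a * f i j).
Proof. by apply/matrixP => i j; rewrite !mxE. Qed.
Lemma mk41 : (1 : 'M[R]_4) = mk4 (fun i j => (i == j)%:R).
Proof. by apply/matrixP => i j; rewrite !mxE. Qed.
Lemma mk4_eu (a b : nat) : (a < 4)%N -> (b < 4)%N ->
  eu R (inord a) (inord b) = mk4 (fun i j => ((i == a) && (j == b))%:R).
Proof.
move=> ha hb; apply/matrixP => i j; rewrite !mxE.
by rewrite -!val_eqE /= !inordK.
Qed.
Lemma mk4_eq f g :
  f 0%N 0%N = g 0%N 0%N -> f 0%N 1%N = g 0%N 1%N -> f 0%N 2%N = g 0%N 2%N -> f 0%N 3%N = g 0%N 3%N ->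
  f 1%N 0%N = g 1%N 0%N -> f 1%N 1%N = g 1%N 1%N -> f 1%N 2%N = g 1%N 2%N -> f 1%N 3%N = g 1%N 3%N ->
  f 2%N 0%N = g 2%N 0%N -> f 2%N 1%N = g 2%N 1%N -> f 2%N 2%N = g 2%N 2%N -> f 2%N 3%N = g 2%N 3%N ->
  f 3%N 0%N = g 3%N 0%N -> f 3%N 1%N = g 3%N 1%N -> f 3%N 2%N = g 3%N 2%N -> f 3%N 3%N = g 3%N 3%N ->
  mk4 f = mk4 g.
Proof.
move=> *; apply/matrixP => i j; rewrite !mxE.
by case: i => [[|[|[|[|i]]]] Hi] //; case: j => [[|[|[|[|j]]]] Hj].
Qed.

Lemma E1E : E1 R = mk4 (fun i j => ((i == 2%N) && (j == 1%N))%:R - ((i == 1%N) && (j == 2%N))%:R).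
Proof. by rewrite /E1 !mk4_eu // mk4N mk4D. Qed.
Lemma E2E : E2 R = mk4 (fun i j => ((i == 0%N) && (j == 2%N))%:R - ((i == 2%N) && (j == 0%N))%:R).
Proof. by rewrite /E2 !mk4_eu // mk4N mk4D. Qed.
Lemma E3E : E3 R = mk4 (fun i j => ((i == 1%N) && (j == 0%N))%:R - ((i == 0%N) && (j == 1%N))%:R).
Proof. by rewrite /E3 !mk4_eu // mk4N mk4D. Qed.
Lemma E4E : E4 R = mk4 (fun i j => ((i == 3%N) && (j == 3%N))%:R).
Proof. by rewrite /E4 !mk4_eu. Qed.

Definition Kof (a1 a3 b : R) : 'M[R]_4 := a1 *: E1 R + a3 *: E2 R + b *: E3 R.
Lemma K3 (a1 a3 b : R) :
  Kof a1 a3 b ^+ 3 = - (a1^+2 + a3^+2 + b^+2) *: Kof a1 a3 b.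
Proof.
rewrite [_ ^+ 3]exprS [_ ^+ 2]exprS expr1 /Kof E1E E2E E3E.
rewrite !mk4Z !mk4D !mk4M mk4Z.
apply: mk4_eq => /=; ring.
Qed.

Lemma QQ : E4 R * E4 R = E4 R.
Proof. rewrite E4E mk4M; apply: mk4_eq => /=; ring. Qed.

Lemma parity m : m = 0%N \/ (exists j, m = j.*2.+1) \/ (exists j, m = (j.+1).*2).
Proof.
elim: m => [|m [->|[[j ->]|[j ->]]]]; first by left.
- by right; left; exists 0%N.
- by right; right; exists j.
- by right; left; exists j.+1.
Qed.

Lemma one4 : (1 : 'M[R]_4) = 1%:M. Proof. by []. Qed.

Section Key.
Variables (K : 'M[R]_4) (w t q : R).
Hypothesis w0 : w != 0.
Hypothesis HK3 : K ^+ 3 = - (w ^+ 2) *: K.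
Hypothesis HKQ : K * E4 R = 0.
Hypothesis HQK : E4 R * K = 0.
Let Q := E4 R.
Let X := t *: K + q *: Q.

Lemma powX k : X ^+ k.+1 = t ^+ k.+1 *: K ^+ k.+1 + q ^+ k.+1 *: Q.
Proof.
elim: k => [|k IH]; first by rewrite !expr1.
rewrite exprS IH /X !mulrDl !mulrDr -!scalerAl -!scalerAr !scalerA.
have -> : Q * K ^+ k.+1 = 0 by rewrite exprS mulrA HQK mul0r.
rewrite HKQ QQ !scaler0 addr0 add0r -!exprS.
by [].
Qed.

Lemma Kodd j : K ^+ (j.*2.+1) = (- w ^+ 2) ^+ j *: K.
Proof.
elim: j => [|j IH]; first by rewrite expr1 expr0 scale1r.
have -> : ((j.+1).*2.+1 = j.*2.+1 + 2)%N by rewrite doubleS addn2.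
rewrite exprD IH -scalerAl -exprS HK3 scalerA -exprSr.
by [].
Qed.

Lemma Keven j : K ^+ ((j.+1).*2) = (- w ^+ 2) ^+ j *: K ^+ 2.
Proof.
by rewrite doubleS exprSr Kodd -scalerAl -expr2.
Qed.

Let D := 1 - Q + (w ^+ 2)^-1 *: K ^+ 2.
Let x := w * t.

Lemma term k : (k`!%:R)^-1 *: X ^+ k =
  exp_coeff 0 k *: D + (w^-1 * sin_coeff x k) *: K
  + (- (w ^+ 2)^-1 * cos_coeff x k) *: K ^+ 2 + exp_coeff q k *: Q.
Proof.
have [->|[[j ->]|[j ->]]] := parity k.
- rewrite /exp_coeff /sin_coeff /cos_coeff /D /= !expr0 one4.
  apply/matrixP => i l; rewrite !mxE; field.
  by rewrite w0 pnatr_eq0 -lt0n fact_gt0.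
- rewrite powX Kodd /exp_coeff /sin_coeff /cos_coeff /D /= odd_double /=.
  rewrite expr0n /= doubleK /x exprMn [(- w ^+ 2) ^+ _]exprNn.
  have -> : w ^+ (j.*2.+1) = w * (w ^+ 2) ^+ j by rewrite exprS -exprM mul2n.
  have hf : (j.*2.+1)`!%:R != 0 :> R by rewrite pnatr_eq0 -lt0n fact_gt0.
  apply/matrixP => i l; rewrite !mxE; field.
  by rewrite hf w0.
- rewrite -[(j.+1).*2]/(j.*2.+1).+1 powX -[(j.*2.+1).+1]/((j.+1).*2) Keven.
  rewrite /exp_coeff /sin_coeff /cos_coeff /D /= odd_double /=.
  rewrite expr0n /= doubleK /x exprMn [(- w ^+ 2) ^+ _]exprNn.
  have -> : w ^+ ((j.+1).*2) = w ^+ 2 * (w ^+ 2) ^+ j by rewrite -exprS -exprM mul2n.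
  rewrite -exprnP [(-1) ^+ j.+1]exprS.
  have hf : ((j.+1).*2)`!%:R != 0 :> R by rewrite pnatr_eq0 -lt0n fact_gt0.
  apply/matrixP => i l; rewrite !mxE; field.
  by rewrite hf w0.
Qed.

Lemma seriesX n : series (fun k => (k`!%:R)^-1 *: X ^+ k) n =
  series (exp_coeff 0) n *: D + (w^-1 * series (sin_coeff x) n) *: K
  + (- (w ^+ 2)^-1 * series (cos_coeff x) n) *: K ^+ 2 + series (exp_coeff q) n *: Q.
Proof.
elim: n => [|n IH].
  by rewrite /series /= !big_geq // !mulr0 !scale0r !addr0.
rewrite !seriesSr IH term.
apply/matrixP => i l; rewrite !mxE; ring.
Qed.

Lemma mexp_key : mexp X =
  1 + (sin x / w) *: K + ((1 - cos x) / w ^+ 2) *: K ^+ 2 + (expR q - 1) *: Q.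
Proof.
have L : (series (fun k => (k`!%:R)^-1 *: X ^+ k) @ \oo -->
  expR 0 *: D + (w^-1 * sin x) *: K + (- (w ^+ 2)^-1 * cos x) *: K ^+ 2 + expR q *: Q)%classic.
  rewrite (_ : series _ = fun n => series (exp_coeff 0) n *: D + (w^-1 * series (sin_coeff x) n) *: K
     + (- (w ^+ 2)^-1 * series (cos_coeff x) n) *: K ^+ 2 + series (exp_coeff q) n *: Q).
    2: by apply/funext => n; exact: seriesX.
  apply: cvgD; [apply: cvgD; [apply: cvgD|]|]; apply: cvgZr_tmp.
  - exact: is_cvg_series_exp_coeff.
  - apply: cvgMl_tmp; rewrite unlock; exact: is_cvg_series_sin_coeff.
  - apply: cvgMl_tmp; rewrite unlock; exact: is_cvg_series_cos_coeff.
  - exact: is_cvg_series_exp_coeff.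
rewrite /mexp (norm_cvg_lim L) expR0 /D one4.
apply/matrixP => i l; rewrite !mxE; field.
by rewrite w0.
Qed.
End Key.
Lemma pairCvE (C : 'M[R]_3) v : pairCv C v =
  mk4 (fun i j => if (i < 3)%N && (j < 3)%N then C (inord i) (inord j)
                  else if (i == 3%N) && (j == 3%N) then expR v else 0).
Proof.
apply/matrixP => i j; rewrite [RHS]mxE /pairCv.
rewrite -[i](@splitK 3 1) -[j](@splitK 3 1).
case: (@fintype.split 3 1 i) => a; case: (@fintype.split 3 1 j) => c;
  rewrite /block_mx !(mxE, unsplitK) /=.
- by rewrite !ltn_ord !inord_val.
- have -> : (3 + c < 3)%N = false by rewrite ltnNge leq_addr.
  by rewrite andbF /= (ltn_eqF (ltn_ord a)).
- by rewrite (ltn_eqF (ltn_ord c)) andbF.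
- case: a => [[|a] ha] //; case: c => [[|c] hc] //=; by rewrite mulr1n.
Qed.


Lemma E4K a1 a3 b : Kof a1 a3 b * E4 R = 0 /\ E4 R * Kof a1 a3 b = 0.
Proof.
have -> : (0 : 'M[R]_4) = mk4 (fun _ _ => 0) by apply/matrixP => i j; rewrite !mxE.
rewrite /Kof E1E E2E E3E E4E !mk4Z !mk4D !mk4M; split; apply: mk4_eq => /=; ring.
Qed.

Lemma E3_3 : E3 R ^+ 3 = - (1 ^+ 2) *: E3 R.
Proof.
rewrite [_ ^+ 3]exprS [_ ^+ 2]exprS expr1 E3E !mk4M mk4Z.
apply: mk4_eq => /=; ring.
Qed.

Lemma E3_4 : E3 R * E4 R = 0 /\ E4 R * E3 R = 0.
Proof.
have -> : (0 : 'M[R]_4) = mk4 (fun _ _ => 0) by apply/matrixP => i j; rewrite !mxE.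
rewrite E3E E4E !mk4M; split; apply: mk4_eq => /=; ring.
Qed.

End S.
Arguments Kof {R}.
Arguments mk4 {R}.
Arguments E4K {R}.
Arguments K3 {R}.
Arguments E3_3 {R}.
Arguments E3_4 {R}.

Theorem theorem7 (R : realType) (a1 a2 a3 b : R) :
  a1 ^+ 2 + a2 ^+ 2 + a3 ^+ 2 = 1 ->
  (a2 != 1 -> a2 != -1 ->
     forall t : R, gamma2 a1 a2 a3 b t = pairCv (Cmat a1 a2 a3 b t) (a2 * t)) /\
  (a2 = 1 \/ a2 = -1 ->
     forall t : R, gamma2 a1 a2 a3 b t = pairCv 1%:M (a2 * t)).
Proof.
move=> hs.
have [h33 [h34 h43]] := (@E3_3 R, @E3_4 R).
have h10 : (1 : R) != 0 by rewrite oner_eq0.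
have second : forall t, mexp (- (t * b) *: e4 R) =
    1 + (- sin (t * b)) *: E3 R + (1 - cos (t * b)) *: E3 R ^+ 2.
  move=> t; have := @mexp_key R (E3 R) 1 (- (t * b)) 0 h10 h33 h34 h43.
  rewrite scale0r addr0 /e4 => ->.
  rewrite expR0 subrr scale0r addr0 !mul1r expr1n invr1 !mulr1 sinN cosN.
  by [].
split.
- move=> h1 h2 t.
  set w := w2 a2 b.
  have hpos : 0 < a1 ^+ 2 + a3 ^+ 2 + b ^+ 2.
    have ha : a1 ^+ 2 + a3 ^+ 2 != 0.
      have -> : a1 ^+ 2 + a3 ^+ 2 = (1 - a2) * (1 + a2).
        by rewrite (_ : (1 - a2) * (1 + a2) = 1 - a2 ^+ 2); [rewrite -hs; ring | ring].
      by apply: mulf_neq0; [rewrite subr_eq0 eq_sym | rewrite addr_eq0 eq_sym eqr_oppLR].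
    have := sqr_ge0 a1; have := sqr_ge0 a3; have := sqr_ge0 b.
    move: ha; rewrite neq_lt => /orP [] ?; lra.
  have hw2 : w ^+ 2 = a1 ^+ 2 + a3 ^+ 2 + b ^+ 2.
    rewrite /w /w2 sqr_sqrtr; first lra.
    lra.
  have w0 : w != 0.
    by apply/eqP => w0; move: hpos; rewrite -hw2 w0 expr0n ltxx.
  have hK3 : Kof a1 a3 b ^+ 3 = - (w ^+ 2) *: Kof a1 a3 b by rewrite K3 hw2.
  have [hKQ hQK] := E4K a1 a3 b.
  have first := @mexp_key R (Kof a1 a3 b) w t (a2 * t) w0 hK3 hKQ hQK.
  rewrite /gamma2 second.
  have -> : t *: (a1 *: e1 R + a2 *: e2 R + a3 *: e3 R + b *: e4 R) =
      t *: Kof a1 a3 b + (a2 * t) *: E4 R.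
    by apply/matrixP => i j; rewrite /e1 /e2 /e3 /e4 /Kof !mxE; ring.
  rewrite first pairCvE !expr2 mulmxE /Kof E1E E2E E3E E4E mk41.
  rewrite !(mk4Z, mk4D, mk4M).
  rewrite /Cmat /mu2 /nu2 -/w (mulrC t b).
  apply: mk4_eq => /=.
  all: try rewrite !mxE !inordK //=.
  all: try ring.
- move=> h t.
  have ha2 : a2 ^+ 2 = 1 by case: h => ->; rewrite ?expr1n ?sqrrN ?expr1n.
  have h13 : a1 ^+ 2 + a3 ^+ 2 = 0 by move: hs; rewrite ha2; lra.
  have ha1 : a1 = 0.
    apply/eqP; rewrite -sqrf_eq0 eq_le sqr_ge0 andbT.
    by have := sqr_ge0 a3; lra.
  have ha3 : a3 = 0.
    apply/eqP; rewrite -sqrf_eq0 eq_le sqr_ge0 andbT.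
    by have := sqr_ge0 a1; lra.
  have first := @mexp_key R (E3 R) 1 (t * b) (a2 * t) h10 h33 h34 h43.
  rewrite /gamma2 second.
  have -> : t *: (a1 *: e1 R + a2 *: e2 R + a3 *: e3 R + b *: e4 R) =
      (t * b) *: E3 R + (a2 * t) *: E4 R.
    by apply/matrixP => i j; rewrite /e1 /e2 /e3 /e4 ha1 ha3 !mxE; ring.
  rewrite first pairCvE !expr2 mulmxE E3E E4E mk41.
  rewrite !(mk4Z, mk4D, mk4M).
  have hsc := cos2Dsin2 (t * b).
  apply: mk4_eq => /=.
  all: try rewrite !mxE -?val_eqE /= ?inordK //=.
  all: rewrite ?mul1r ?invr1 ?mulr1.
  all: try ring.
  all: lra.
Qed.
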